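(* Let $\varphi:\mathbb{R}\to\overline{\mathbb{R}}$ be proper, lsc and convex. Then there exist a proper, lsc, convex, nondecreasing function $\varphi^\uparrow$ and a proper, lsc, convex, nonincreasing function $\varphi^\downarrow$ such that $\varphi=\varphi^\uparrow+\varphi^\downarrow$. In addition, if $\operatorname{int}(\operatorname{dom}\varphi)\neq\emptyset$, then $\partial\varphi(z)=\partial\varphi^\uparrow(z)+\partial\varphi^\downarrow(z)$ for every $z\in\operatorname{dom}\varphi$.
   Context: $\partial$ denotes the convex subdifferential; $\overline{\mathbb{R}}=\mathbb{R}\cup\{\pm\infty\}$. *)

(* Defs.v *)
From HB Require Import structures.
From mathcomp Require Import all_boot all_order all_algebra.
From mathcomp Require Import all_classical all_reals all_analysis.
Set Implicit Arguments. Unset Strict Implicit. Unset Printing Implicit Defensive.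
Import Order.TTheory GRing.Theory Num.Theory.
Import numFieldNormedType.Exports.
Local Open Scope classical_set_scope.
Local Open Scope ring_scope.
Local Open Scope ereal_scope.

Section ConvexAnalysis.
Variable R : realType.
Implicit Types f : R -> \bar R.

Definition edom f : set R := [set x | f x < +oo].

Definition eproper f := (forall x, f x != -oo) /\ (exists x, f x < +oo).

(* convexity of an extended-real-valued function (Jensen inequality;
   for t in ]0,1[, which avoids any 0 * oo convention) *)
Definition econvex f := forall (x y t : R), (0 < t)%R -> (t < 1)%R ->
  f (t * x + (1 - t) * y)%R <= (t%:E * f x) + ((1 - t)%:E * f y).

Definition enondecreasing f := forall x y : R, (x <= y)%R -> f x <= f y.
Definition enonincreasing f := forall x y : R, (x <= y)%R -> f y <= f x.

Definition subdiff f (z : R) : set R :=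
  [set v | f z \is a fin_num /\ forall y : R, f z + (v * (y - z))%:E <= f y].

Definition setsum_R (A B : set R) : set R :=
  [set x | exists a b, A a /\ B b /\ x = (a + b)%R].

End ConvexAnalysis.

(* Main.v *)
Require Import Defs.
From HB Require Import structures.
From mathcomp Require Import all_boot all_order all_algebra.
From mathcomp Require Import all_classical all_reals all_analysis.
From mathcomp Require Import ring lra.
Set Implicit Arguments. Unset Strict Implicit.
Import Order.TTheory GRing.Theory Num.Theory.
Import numFieldNormedType.Exports.
Local Open Scope classical_set_scope.
Local Open Scope ring_scope.
Local Open Scope ereal_scope.

Lemma noimax (R : realType) (f : R -> \bar R) : (forall x, f x != -oo) -> econvex f ->
  forall y x w : R, (y < x)%R -> (x < w)%R -> f y < f x -> f w < f x -> False.
Proof.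
move=> nf cf y x w yx xw fyx fwx.
have yw : (0 < w - y)%R by rewrite subr_gt0 (lt_trans yx xw).
set t := ((w - x) / (w - y))%R.
have t0 : (0 < t)%R by rewrite divr_gt0 // subr_gt0.
have t1 : (t < 1)%R by rewrite ltr_pdivrMr // mul1r; lra.
have ex : (t * y + (1 - t) * w = x)%R.
  rewrite /t; field; by rewrite lt0r_neq0.
have := cf y w t t0 t1; rewrite ex.
move: fyx fwx (nf y) (nf w).
case: (f y) => [ry||] //; case: (f w) => [rw||] //; case: (f x) => [rx||] //=.
rewrite !lte_fin -EFinM -EFinM -EFinD lee_fin => h1 h2 _ _ h3.
nra.
Qed.

Lemma monoR (R : realType) (f : R -> \bar R) (x0 : R) : (forall x, f x != -oo) -> econvex f ->
  (forall y, f x0 <= f y) -> forall x y : R, (x0 <= x)%R -> (x <= y)%R -> f x <= f y.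
Proof.
move=> nf cf mn x y h1 h2.
have [<-//|] := eqVneq x0 x => n1.
have [<-//|] := eqVneq x y => n2.
have l1 : (x0 < x)%R by rewrite lt_neqAle n1.
have l2 : (x < y)%R by rewrite lt_neqAle n2.
rewrite leNgt; apply/negP => h.
exact: (noimax nf cf l1 l2 (le_lt_trans (mn y) h) h).
Qed.

Lemma monoL (R : realType) (f : R -> \bar R) (x0 : R) : (forall x, f x != -oo) -> econvex f ->
  (forall y, f x0 <= f y) -> forall x y : R, (x <= x0)%R -> (y <= x)%R -> f x <= f y.
Proof.
move=> nf cf mn x y h1 h2.
have [->//|] := eqVneq x x0 => n1.
have [->//|] := eqVneq y x => n2.
have l1 : (x < x0)%R by rewrite lt_neqAle n1.
have l2 : (y < x)%R by rewrite lt_neqAle n2.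
rewrite leNgt; apply/negP => h.
exact: (noimax nf cf l2 l1 h (le_lt_trans (mn y) h)).
Qed.

Lemma lsc_comp (R : realType) (f : R -> \bar R) (g : R -> R) :
  lower_semicontinuous f -> continuous g -> lower_semicontinuous (f \o g).
Proof.
move=> lf cg x a /lf [V nV HV].
exists (g @^-1` V); first exact: cg.
by move=> y /HV.
Qed.

Lemma lsc_subc (R : realType) (f : R -> \bar R) (k : R) :
  lower_semicontinuous f -> lower_semicontinuous (fun x => f x - k%:E).
Proof.
move=> lf x a; rewrite lteBrDr // => /lf [V nV HV].
by exists V => // y /HV; rewrite lteBrDr.
Qed.

Lemma cont_max (R : realType) (c : R) : continuous (fun x : R => Num.max x c).
Proof.
move=> x. apply: (@continuous_max _ _ id (fun=> c)); [exact: cvg_id | exact: cvg_cst].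
Qed.

Lemma cont_min (R : realType) (c : R) : continuous (fun x : R => Num.min x c).
Proof.
move=> x. apply: (@continuous_min _ _ id (fun=> c)); [exact: cvg_id | exact: cvg_cst].
Qed.

Lemma exmin (R : realType) (f : R -> \bar R) : (forall x, f x != -oo) -> econvex f ->
  lower_semicontinuous f ->
  forall a b c d : R, (a < b)%R -> f a < f b -> (c < d)%R -> f d < f c ->
  exists x0, forall y, f x0 <= f y.
Proof.
move=> nf cf lf a b c d ab fab cd fcd.
pose S := [set x | exists w, (x < w)%R /\ f w < f x].
have Sc : S c by exists d.
have Sb : forall x, S x -> (x <= b)%R.
  move=> x [w [xw fw]]; rewrite leNgt; apply/negP => bx.
  have [h|h] := ltP (f w) (f b).
    exact: (noimax nf cf ab (lt_trans bx xw) fab h).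
  exact: (noimax nf cf bx xw (le_lt_trans h fw) fw).
have hs : has_sup S by split; [exists c | exists b => x /Sb].
exists (sup S) => y; rewrite leNgt; apply/negP => hy.
have : f y != +oo by rewrite -ltey (lt_le_trans hy (leey _)).
move: hy (nf y); case Ey: (f y) => [ry||] //= hy _ _.
have [V nV HV] := lf (sup S) ry hy.
move: nV; rewrite -nbhs_ballE => -[e /= e0 He].
have inV : forall u, (sup S - e < u)%R -> (u < sup S + e)%R -> ry%:E < f u.
  move=> u h1 h2; apply: HV; apply: He; rewrite -ball_normE /ball_ /=.
  by rewrite ltr_distlC h1 h2.
have [yS|yS] := ltP y (sup S).
  have eps0 : (0 < Num.min e (sup S - y))%R by rewrite lt_min e0 subr_gt0.
  have [u Su hu] := sup_adherent eps0 hs.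
  have uS : (u <= sup S)%R by exact: sup_upper_bound.
  have h1 : (Num.min e (sup S - y) <= e)%R by rewrite ge_min lexx.
  have h2 : (Num.min e (sup S - y) <= sup S - y)%R by rewrite ge_min lexx orbT.
  have fu : ry%:E < f u by apply: inV; lra.
  have yu : (y < u)%R by lra.
  case: Su => w [uw fw].
  by apply: (noimax nf cf yu uw); [rewrite Ey|].
have [ey|ney] := eqVneq y (sup S).
  by move: hy; rewrite -Ey ey ltxx.
have Sy : (sup S < y)%R by rewrite lt_neqAle eq_sym ney.
pose u := (sup S + Num.min e (y - sup S) / 2)%R.
have eps0 : (0 < Num.min e (y - sup S))%R by rewrite lt_min e0 subr_gt0.
have h1 : (Num.min e (y - sup S) <= e)%R by rewrite ge_min lexx.
have h2 : (Num.min e (y - sup S) <= y - sup S)%R by rewrite ge_min lexx orbT.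
have fu : ry%:E < f u by apply: inV; rewrite /u; lra.
have uy : (u < y)%R by rewrite /u; lra.
have Su : S u by exists y; split => //; rewrite Ey.
have := sup_upper_bound hs Su; rewrite /u; lra.
Qed.

Definition fup (R : realType) (f : R -> \bar R) (x0 m : R) (x : R) := f (Num.max x x0) - m%:E.
Definition fdn (R : realType) (f : R -> \bar R) (x0 : R) (x : R) := f (Num.min x x0).

Lemma convcomb (R : realType) (t : R) (A B C : \bar R) : (0 < t)%R -> (t < 1)%R ->
  A != -oo -> B != -oo ->
  (forall a b, A = a%:E -> B = b%:E -> C <= (t * a + (1 - t) * b)%:E) ->
  C <= t%:E * A + (1 - t)%:E * B.
Proof.
move=> t0 t1; have t0' : 0 < t%:E by rewrite lte_fin.
have t1' : 0 < (1 - t)%:E by rewrite lte_fin subr_gt0.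
case: A => [a| |] //; case: B => [b| |] // _ _ h.
- by rewrite -!EFinM -EFinD; exact: h.
- by rewrite gt0_muley // addey // leey.
- by rewrite gt0_muley // addye ?leey // -EFinM.
- by rewrite !gt0_muley // leey.
Qed.

Section MinCase.
Variables (R : realType) (f : R -> \bar R) (x0 m : R).
Hypotheses (nf : forall x, f x != -oo) (cf : econvex f) (lf : lower_semicontinuous f)
  (hm : f x0 = m%:E) (mn : forall y, f x0 <= f y).

Lemma fup_nf x : fup f x0 m x != -oo.
Proof. by rewrite /fup; move: (nf (Num.max x x0)); case: (f _). Qed.

Lemma fdn_nf x : fdn f x0 x != -oo.
Proof. exact: nf. Qed.

Lemma fup_x0 : fup f x0 m x0 = 0.
Proof. by rewrite /fup maxxx hm subee. Qed.

Lemma fdn_x0 : fdn f x0 x0 = m%:E.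
Proof. by rewrite /fdn minxx hm. Qed.

Lemma fup_lsc : lower_semicontinuous (fup f x0 m).
Proof. rewrite /fup; apply: lsc_subc; exact: (lsc_comp lf (@cont_max _ x0)). Qed.

Lemma fdn_lsc : lower_semicontinuous (fdn f x0).
Proof. rewrite /fdn; exact: (lsc_comp lf (@cont_min _ x0)). Qed.

Lemma fup_mono : enondecreasing (fup f x0 m).
Proof.
move=> x y xy; rewrite /fup; apply: leeB => //.
apply: (monoR nf cf mn); first by rewrite le_max lexx orbT.
by rewrite ge_max !le_max xy lexx !orbT.
Qed.

Lemma fdn_mono : enonincreasing (fdn f x0).
Proof.
move=> x y xy; rewrite /fdn.
apply: (monoL nf cf mn); first by rewrite ge_min lexx orbT.
by rewrite le_min !ge_min xy lexx !orbT.
Qed.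

Lemma fup_cvx : econvex (fup f x0 m).
Proof.
move=> x y t t0 t1; apply: convcomb => //; try exact: fup_nf.
move=> a b; rewrite /fup.
case EX: (f (Num.max x x0)) => [r||] //= [ea]; case EY: (f (Num.max y x0)) => [s||] //= [eb].
set z := (t * x + (1 - t) * y)%R.
set p := (t * Num.max x x0 + (1 - t) * Num.max y x0)%R.
have hx1 : (x <= Num.max x x0)%R by rewrite le_max lexx.
have hx2 : (x0 <= Num.max x x0)%R by rewrite le_max lexx orbT.
have hy1 : (y <= Num.max y x0)%R by rewrite le_max lexx.
have hy2 : (x0 <= Num.max y x0)%R by rewrite le_max lexx orbT.
have zp : (Num.max z x0 <= p)%R.
  rewrite ge_max; apply/andP; split; rewrite /z /p; nra.
have h1 : f (Num.max z x0) <= (t * r + (1 - t) * s)%:E.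
  apply: le_trans (monoR nf cf mn _ zp) _; first by rewrite le_max lexx orbT.
  by have := @cf (Num.max x x0) (Num.max y x0) t t0 t1; rewrite EX EY -!EFinM -EFinD.
rewrite EFinN leeBlDr // -EFinD; apply: (le_trans h1); rewrite lee_fin -ea -eb.
by rewrite le_eqVlt; apply/orP; left; apply/eqP; ring.
Qed.

Lemma fdn_cvx : econvex (fdn f x0).
Proof.
move=> x y t t0 t1; rewrite /fdn.
set z := (t * x + (1 - t) * y)%R.
set p := (t * Num.min x x0 + (1 - t) * Num.min y x0)%R.
have hx1 : (Num.min x x0 <= x)%R by rewrite ge_min lexx.
have hx2 : (Num.min x x0 <= x0)%R by rewrite ge_min lexx orbT.
have hy1 : (Num.min y x0 <= y)%R by rewrite ge_min lexx.
have hy2 : (Num.min y x0 <= x0)%R by rewrite ge_min lexx orbT.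
have zp : (p <= Num.min z x0)%R.
  rewrite le_min; apply/andP; split; rewrite /z /p; nra.
apply: le_trans (monoL nf cf mn _ zp) _; first by rewrite ge_min lexx orbT.
exact: cf.
Qed.

Lemma dec x : f x = fup f x0 m x + fdn f x0 x.
Proof.
rewrite /fup /fdn; have [h|h] := leP x x0.
  by rewrite hm subee // add0e.
by rewrite hm subeK.
Qed.

End MinCase.

Section MinCase2.
Variables (R : realType) (f : R -> \bar R) (x0 m : R).
Hypotheses (nf : forall x, f x != -oo) (cf : econvex f)
  (hm : f x0 = m%:E) (mn : forall y, f x0 <= f y).

Lemma sdA z : (x0 <= z)%R -> subdiff (fdn f x0) z 0%R.
Proof.
move=> h; rewrite /subdiff /fdn min_r // hm; split => // y.
by rewrite mul0r adde0 -hm.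
Qed.

Lemma sdB z : (z <= x0)%R -> subdiff (fup f x0 m) z 0%R.
Proof.
move=> h; rewrite /subdiff /fup max_r // hm subee //; split => // y.
by rewrite mul0r adde0 leeBrDr // add0e -hm.
Qed.

Lemma wval z v : subdiff f z v -> exists w, f z = w%:E.
Proof. by move=> [fz _]; exists (fine (f z)); rewrite fineK. Qed.

Lemma sdE z v : subdiff f z v -> (x0 < z)%R -> (0 <= v)%R.
Proof.
move=> sd xz; have [w Ew] := wval sd; case: sd => _ hv.
have := hv x0; rewrite Ew hm -EFinD lee_fin => h.
have := mn z; rewrite Ew hm lee_fin => h'.
rewrite leNgt; apply/negP => v0; nra.
Qed.

Lemma sdF z v : subdiff f z v -> (z < x0)%R -> (v <= 0)%R.
Proof.
move=> sd xz; have [w Ew] := wval sd; case: sd => _ hv.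
have := hv x0; rewrite Ew hm -EFinD lee_fin => h.
have := mn z; rewrite Ew hm lee_fin => h'.
rewrite leNgt; apply/negP => v0; nra.
Qed.

Lemma sdC z v : subdiff f z v -> (x0 <= z)%R -> (0 <= v)%R -> subdiff (fup f x0 m) z v.
Proof.
move=> sd xz v0; have [w Ew] := wval sd; case: sd => _ hv.
have h0 := hv x0; rewrite Ew hm -EFinD lee_fin in h0.
rewrite /subdiff /fup max_l // Ew -EFinB; split => // y.
have [hy|hy] := leP x0 y.
  rewrite leeBrDr // -!EFinD; have := hv y; rewrite Ew -EFinD.
  by have -> : (w - m + v * (y - z) + m = w + v * (y - z))%R by ring.
rewrite hm -EFinB -EFinD lee_fin; nra.
Qed.

Lemma sdD z v : subdiff f z v -> (z <= x0)%R -> (v <= 0)%R -> subdiff (fdn f x0) z v.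
Proof.
move=> sd xz v0; have [w Ew] := wval sd; case: sd => _ hv.
have h0 := hv x0; rewrite Ew hm -EFinD lee_fin in h0.
rewrite /subdiff /fdn min_l // Ew; split => // y.
have [hy|hy] := leP y x0.
  by have := hv y; rewrite Ew.
rewrite hm -EFinD lee_fin; nra.
Qed.

End MinCase2.

Lemma sd0 (R : realType) (z a : R) : subdiff (fun _ => 0) z a -> a = 0%R.
Proof.
move=> [_ h]; have := h (z + 1)%R; have := h (z - 1)%R.
rewrite !add0e !lee_fin => h1 h2.
apply/eqP; rewrite eq_le; apply/andP; split; lra.
Qed.

Lemma sd0_sum (R : realType) (f : R -> \bar R) z :
  subdiff f z = setsum_R (subdiff (fun _ => 0) z) (subdiff f z).
Proof.
apply/seteqP; split => v.
  move=> h; exists 0%R, v; split; last by split => //; rewrite add0r.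
  by split => // y; rewrite mul0r adde0.
by move=> [a [b [ha [hb ->]]]]; rewrite (sd0 ha) add0r.
Qed.

Lemma sd_sum0 (R : realType) (f : R -> \bar R) z :
  subdiff f z = setsum_R (subdiff f z) (subdiff (fun _ => 0) z).
Proof.
apply/seteqP; split => v.
  move=> h; exists v, 0%R; split => //; split; last by rewrite addr0.
  by split => // y; rewrite mul0r adde0.
by move=> [a [b [ha [hb ->]]]]; rewrite (sd0 hb) addr0.
Qed.

Lemma sd_sum (R : realType) (f g h : R -> \bar R) z a b :
  (forall x, f x = g x + h x) -> subdiff g z a -> subdiff h z b -> subdiff f z (a + b)%R.
Proof.
move=> e [ga ha] [gb hb]; split; first by rewrite e fin_numD ga gb.
move=> y; rewrite !e.
apply: le_trans _ (leeD (ha y) (hb y)).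
rewrite -(fineK ga) -(fineK gb) -!EFinD lee_fin; lra.
Qed.

Unset Implicit Arguments. Set Strict Implicit.

Theorem lemma3p1 (R : realType) (phi : R -> \bar R) :
  eproper phi -> lower_semicontinuous phi -> econvex phi ->
  exists phiu phid : R -> \bar R,
    [/\ eproper phiu, lower_semicontinuous phiu, econvex phiu & enondecreasing phiu] /\
    [/\ eproper phid, lower_semicontinuous phid, econvex phid & enonincreasing phid] /\
    (forall x, phi x = phiu x + phid x) /\
    ((interior (edom phi) !=set0) ->
       forall z, edom phi z -> subdiff phi z = setsum_R (subdiff phiu z) (subdiff phid z)).
Proof.
move=> [nf [x1 fx1]] lf cf.
have P0 : eproper (fun _ : R => 0 : \bar R) by split => //; exists x1; rewrite ltey.
have L0 : lower_semicontinuous (fun _ : R => 0 : \bar R).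
  by move=> x a h; exists setT => //; exact: filterT.
have C0 : econvex (fun _ : R => 0 : \bar R) by move=> x y t _ _; rewrite !mule0 adde0.
have PF : eproper phi by split=> //; exists x1.
have [ni|ni] := pselect (enonincreasing phi).
  exists (fun _ => 0), phi; split; first by split => // x y _.
  split; first by split.
  split; first by move=> x; rewrite add0e.
  by move=> _ z _; exact: sd0_sum.
have [nd|nd] := pselect (enondecreasing phi).
  exists phi, (fun _ => 0); split; first by split.
  split; first by split => // x y _.
  split; first by move=> x; rewrite adde0.
  by move=> _ z _; exact: sd_sum0.
move: ni; rewrite /enonincreasing => /existsNP [a /existsNP [b /not_implyP [ab /negP]]].
rewrite -ltNge => fab.
move: nd; rewrite /enondecreasing => /existsNP [c /existsNP [d /not_implyP [cd /negP]]].
rewrite -ltNge => fcd.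
have ab' : (a < b)%R.
  rewrite lt_neqAle ab andbT; apply/eqP => eab; by move: fab; rewrite eab ltxx.
have cd' : (c < d)%R.
  rewrite lt_neqAle cd andbT; apply/eqP => ecd; by move: fcd; rewrite ecd ltxx.
have [x0 mn] := exmin nf cf lf ab' fab cd' fcd.
have fx0 : phi x0 \is a fin_num.
  rewrite fin_numE nf /= -ltey; exact: le_lt_trans (mn x1) fx1.
have hm : phi x0 = (fine (phi x0))%:E by rewrite fineK.
set m := fine (phi x0) in hm.
exists (fup phi x0 m), (fdn phi x0); split.
  split.
  - split; first exact: fup_nf.
    by exists x0; rewrite fup_x0 // ltey.
  - exact: fup_lsc.
  - exact: fup_cvx.
  - exact: fup_mono.
split.
  split.
  - split; first exact: fdn_nf.
    by exists x0; rewrite (fdn_x0 hm) ltey.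
  - exact: fdn_lsc.
  - exact: fdn_cvx.
  - exact: fdn_mono.
split; first exact: dec.
move=> _ z _; apply/seteqP; split => v.
  move=> sd; have [h|h|h] := ltgtP x0 z.
  - exists v, 0%R; split; first exact: (sdC hm sd (ltW h) (sdE hm mn sd h)).
    by split; [exact: (sdA hm mn (ltW h))|rewrite addr0].
  - exists 0%R, v; split; first exact: (sdB hm mn (ltW h)).
    by split; [exact: (sdD hm sd (ltW h) (sdF hm mn sd h))|rewrite add0r].
  - subst z; have [v0|v0] := leP 0%R v.
      exists v, 0%R; split; first exact: (sdC hm sd (lexx _) v0).
      by split; [exact: (sdA hm mn (lexx _))|rewrite addr0].
    exists 0%R, v; split; first exact: (sdB hm mn (lexx _)).
    by split; [exact: (sdD hm sd (lexx _) (ltW v0))|rewrite add0r].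
move=> [a' [b' [ha [hb ->]]]].
apply: sd_sum ha hb; exact: dec.
Qed.
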